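(* Let $t\in\mathbb N$ and $N=\lvert t\rvert_{\mathtt{01}}$. Then for all real $\vartheta$ with $\lvert\vartheta\rvert\le\pi$, \[ \lvert\gamma_t(\vartheta)\rvert\le\Bigl(1-\frac{1}{128}\vartheta^2\Bigr)^{\lfloor N/2\rfloor}. \]
   Context: For $n\in\mathbb N=\{0,1,\dots\}$, $\lvert n\rvert_{\mathtt{01}}$ denotes the number of maximal blocks of $\mathtt 1$s in the binary expansion of $n$ (equivalently, the number of occurrences of $\mathtt{01}$ after padding with a leading $\mathtt 0$). Let $\mathsf r(n)$ be the number of (overlapping) occurrences of $\mathtt{11}$ in the binary expansion of $n$, $d(t,n)=\mathsf r(n+t)-\mathsf r(n)$, and $c_t(k)$ the asymptotic density (which exists) of $\{n\in\mathbb N:d(t,n)=k\}$, $k\in\mathbb Z$. Let $\gamma_t(\vartheta)=\sum_{k\in\mathbb Z}c_t(k)\exp(ik\vartheta)$. *)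

(* Defs.v *)
From Stdlib Require Import Reals ZArith List Arith Bool.
From Coquelicot Require Import Coquelicot.
Import ListNotations.
Open Scope R_scope.
Open Scope bool_scope.

(* Indices 0 .. log2 n + 1 suffice: higher bits are all 0. *)
Definition bit_range (n : nat) : list nat := seq 0 (S (S (Nat.log2 n))).

(* |n|_01 : number of occurrences of "01" in the binary expansion of n padded
   with a leading 0 (reading most significant bit first): positions i with
   bit (i+1) = 0 and bit i = 1; equivalently number of maximal blocks of 1s. *)
Definition blocks01 (n : nat) : nat :=
  length (filter (fun i => negb (Nat.testbit n (S i)) && Nat.testbit n i)
                 (bit_range n)).

Definition r11 (n : nat) : nat :=
  length (filter (fun i => Nat.testbit n (S i) && Nat.testbit n i)
                 (bit_range n)).

Definition dd (t n : nat) : Z := (Z.of_nat (r11 (n + t)) - Z.of_nat (r11 n))%Z.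

Definition count_d (t : nat) (k : Z) (M : nat) : nat :=
  length (filter (fun n => Z.eqb (dd t n) k) (seq 0 M)).

(* c_t(k): asymptotic density of {n : d(t,n) = k}, i.e. the limit of
   #{n < M : d(t,n) = k} / M as M -> oo (this limit exists). *)
Definition c_t (t : nat) (k : Z) : R :=
  real (Lim_seq (fun M => INR (count_d t k M) / INR M)).

Definition CSeries (f : nat -> C) : C :=
  (Series (fun m => fst (f m)), Series (fun m => snd (f m))).
Definition sumZ (f : Z -> C) : C :=
  Cplus (CSeries (fun m => f (Z.of_nat m)))
        (CSeries (fun m => f (- Z.of_nat m - 1)%Z)).

Definition cexpi (x : R) : C := (cos x, sin x).

Definition gamma_t (t : nat) (theta : R) : C :=
  sumZ (fun k => Cmult (RtoC (c_t t k)) (cexpi (IZR k * theta))).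

(* Main.v *)
Require Import Defs.
From Stdlib Require Import Reals ZArith List Arith.
From Coquelicot Require Import Coquelicot.
From Stdlib Require Import Lia Bool Lra Psatz.
Import ListNotations.
Open Scope R_scope.

Definition cntf (f : bool -> bool -> bool) (n : nat) : nat :=
  length (filter (fun i => f (Nat.testbit n (S i)) (Nat.testbit n i)) (bit_range n)).

Lemma filter_length_map_S (p : nat -> bool) (l : list nat) :
  length (filter p (map S l)) = length (filter (fun i => p (S i)) l).
Proof. induction l as [|a l IH]; simpl; [reflexivity|]. destruct (p (S a)); simpl; auto. Qed.

Lemma cntf_step (f : bool -> bool -> bool) (Hf : f false false = false) (y : nat) (b : bool) :
  cntf f (2 * y + Nat.b2n b) = (cntf f y + Nat.b2n (f (Nat.odd y) b))%nat.
Proof.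
  destruct (Nat.eq_dec y 0) as [->|Hy].
  - unfold cntf, bit_range. destruct b; cbv; rewrite ?Hf; destruct (f false true); reflexivity.
  - unfold cntf, bit_range at 1.
    assert (HL : Nat.log2 (2 * y + Nat.b2n b) = S (Nat.log2 y)).
    { destruct b; simpl Nat.b2n. - apply Nat.log2_succ_double; lia.
      - rewrite Nat.add_0_r; apply Nat.log2_double; lia. }
    rewrite HL.
    change (seq 0 (S (S (S (Nat.log2 y))))) with (0%nat :: seq 1 (S (S (Nat.log2 y)))).
    rewrite <- seq_shift. cbn [filter].
    rewrite Nat.testbit_succ_r, Nat.testbit_0_r, Nat.bit0_odd.
    assert (E : length (filter (fun i => f (Nat.testbit (2 * y + Nat.b2n b) (S i))
                                            (Nat.testbit (2 * y + Nat.b2n b) i))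
                                 (map S (seq 0 (S (S (Nat.log2 y)))))) = cntf f y).
    { rewrite filter_length_map_S. unfold cntf, bit_range.
      f_equal. apply filter_ext. intro i. rewrite !Nat.testbit_succ_r. reflexivity. }
    destruct (f (Nat.odd y) b); cbn [length Nat.b2n]; rewrite E; unfold cntf; lia.
Qed.

Lemma r11_cntf n : r11 n = cntf andb n. Proof. reflexivity. Qed.
Lemma blocks01_cntf n : blocks01 n = cntf (fun a b => negb a && b) n. Proof. reflexivity. Qed.

Lemma r11_step y b : r11 (2 * y + Nat.b2n b) = (r11 y + Nat.b2n (Nat.odd y && b))%nat.
Proof. rewrite !r11_cntf. apply cntf_step. reflexivity. Qed.

Lemma blocks01_step y b : blocks01 (2 * y + Nat.b2n b) = (blocks01 y + Nat.b2n (negb (Nat.odd y) && b))%nat.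
Proof. rewrite !blocks01_cntf. apply cntf_step. reflexivity. Qed.

Lemma r11_0 : r11 0 = 0%nat. Proof. reflexivity. Qed.
Lemma r11_1 : r11 1 = 0%nat. Proof. reflexivity. Qed.

Lemma odd_2yb y b : Nat.odd (2 * y + Nat.b2n b) = b.
Proof. rewrite <- Nat.bit0_odd. apply Nat.testbit_0_r. Qed.

Lemma decomp (m : nat) : m = (2 * (m / 2) + Nat.b2n (Nat.odd m))%nat.
Proof. rewrite <- Nat.div2_div. apply Nat.div2_odd. Qed.

Lemma div_2yb y b : ((2 * y + Nat.b2n b) / 2 = y)%nat.
Proof. destruct b; simpl Nat.b2n. - rewrite <- Nat.div2_div. rewrite Nat.add_1_r. apply Nat.div2_succ_double.
 - rewrite Nat.add_0_r, Nat.mul_comm. apply Nat.div_mul. lia. Qed.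

Lemma r11_split (j : nat) : forall x H, (x < 2 ^ S j)%nat ->
  r11 (H * 2 ^ S j + x) = (r11 H + r11 x + Nat.b2n (Nat.odd H && (2 ^ j <=? x)%nat))%nat.
Proof.
  induction j as [|j IH]; intros x H Hx.
  - simpl in Hx. assert (x = 0 \/ x = 1)%nat as [->| ->] by lia.
    + replace (H * 2 ^ 1 + 0)%nat with (2 * H + Nat.b2n false)%nat by (simpl; lia).
      rewrite r11_step, r11_0. simpl. destruct (Nat.odd H); simpl; lia.
    + replace (H * 2 ^ 1 + 1)%nat with (2 * H + Nat.b2n true)%nat by (simpl; lia).
      rewrite r11_step, r11_1. simpl. destruct (Nat.odd H); simpl; lia.
  - rewrite (decomp x). set (x' := (x / 2)%nat). set (b := Nat.odd x).
    assert (Hx' : (x' < 2 ^ S j)%nat).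
    { unfold x'. rewrite Nat.pow_succ_r' in Hx. apply Nat.Div0.div_lt_upper_bound. lia. }
    replace (H * 2 ^ S (S j) + (2 * x' + Nat.b2n b))%nat with (2 * (H * 2 ^ S j + x') + Nat.b2n b)%nat
      by (rewrite (Nat.pow_succ_r' 2 (S j)); lia).
    rewrite !r11_step, IH by exact Hx'.
    assert (Ho : Nat.odd (H * 2 ^ S j + x') = Nat.odd x').
    { rewrite Nat.pow_succ_r'. replace (H * (2 * 2 ^ j) + x')%nat with (x' + 2 * (H * 2^j))%nat by lia.
      rewrite Nat.odd_add_mul_2. reflexivity. }
    rewrite Ho.
    assert (Hc : (2 ^ S j <=? 2 * x' + Nat.b2n b)%nat = (2 ^ j <=? x')%nat).
    { rewrite Nat.pow_succ_r'. destruct (2 ^ j <=? x')%nat eqn:E.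
      - apply Nat.leb_le in E. apply Nat.leb_le. lia.
      - apply Nat.leb_gt in E. apply Nat.leb_gt. destruct b; simpl; lia. }
    rewrite Hc. lia.
Qed.

Module Part2.
Local Open Scope C_scope.

Definition b2Z (b : bool) : Z := Z.of_nat (Nat.b2n b).

Section Th.
Variable th : R.

Definition E (k : Z) : C := cexpi (IZR k * th).

Lemma E_add a b : E (a + b) = E a * E b.
Proof.
  unfold E, cexpi. rewrite plus_IZR, Rmult_plus_distr_r, cos_plus, sin_plus.
  unfold Cmult; simpl. f_equal; ring.
Qed.

Lemma E_0 : E 0 = 1.
Proof. unfold E, cexpi. rewrite Rmult_0_l, cos_0, sin_0. reflexivity. Qed.

Lemma Cmod_E k : Cmod (E k) = 1%R.
Proof.
  unfold E, cexpi, Cmod. simpl fst; simpl snd. rewrite <- sqrt_1. f_equal.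
  pose proof (sin2_cos2 (IZR k * th)) as H. rewrite !Rsqr_pow2 in H. lra.
Qed.

Definition expo (t n : nat) (u v : bool) : Z :=
  (dd t n + b2Z u * b2Z (Nat.odd (n + t)) - b2Z v * b2Z (Nat.odd n))%Z.

Fixpoint sumC (f : nat -> C) (N : nat) : C :=
  match N with O => 0 | S N' => sumC f N' + f N' end.

Lemma sumC_double f N : sumC f (2 * N) = sumC (fun n => f (2 * n)%nat + f (2 * n + 1)%nat) N.
Proof.
  induction N as [|N IH]; [reflexivity|].
  replace (2 * S N)%nat with (S (S (2 * N))) by lia. cbn [sumC]. rewrite IH.
  replace (S (2 * N)) with (2 * N + 1)%nat by lia. rewrite Cplus_assoc. reflexivity.
Qed.

Lemma sumC_plus f g N : sumC (fun n => f n + g n) N = sumC f N + sumC g N.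
Proof. induction N; simpl. - rewrite Cplus_0_l. reflexivity.
  - rewrite IHN. ring. Qed.

Lemma sumC_scal c f N : sumC (fun n => c * f n) N = c * sumC f N.
Proof. induction N; simpl. - ring. - rewrite IHN. ring. Qed.

Lemma sumC_ext f g N : (forall n, (n < N)%nat -> f n = g n) -> sumC f N = sumC g N.
Proof. induction N; intros H; simpl; [reflexivity|]. rewrite IHN by (intros; apply H; lia). rewrite H by lia. reflexivity. Qed.

Lemma sumC_bound f N K : (forall n, (n < N)%nat -> Cmod (f n) <= K)%R -> Cmod (sumC f N) <= (INR N * K)%R.
Proof.
  induction N; intros H; cbn [sumC].
  - rewrite Cmod_0. simpl. lra.
  - eapply Rle_trans; [apply Cmod_triangle|]. rewrite S_INR.
    assert (A := IHN (fun n Hn => H n ltac:(lia))). assert (B := H N ltac:(lia)). lra.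
Qed.

Definition Sm (j t : nat) (u v : bool) : C := sumC (fun n => E (expo t n u v)) (2 ^ j).

Lemma expo_split t' c n bn u v :
  expo (2 * t' + Nat.b2n c) (2 * n + Nat.b2n bn) u v =
  (expo (t' + Nat.b2n (c && bn)) n (xorb c bn) bn + b2Z u * b2Z (xorb c bn) - b2Z v * b2Z bn)%Z.
Proof.
  unfold expo, dd.
  assert (Heq : (2 * n + Nat.b2n bn + (2 * t' + Nat.b2n c) = 2 * (n + (t' + Nat.b2n (c && bn))) + Nat.b2n (xorb c bn))%nat)
    by (destruct c, bn; simpl; lia).
  rewrite Heq, !r11_step, !odd_2yb. unfold b2Z.
  destruct c, bn, u, v; simpl Nat.b2n; simpl xorb; simpl andb; rewrite ?andb_true_r, ?andb_false_r; simpl Nat.b2n; lia.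
Qed.

Lemma S_step j t' c u v :
  Sm (S j) (2 * t' + Nat.b2n c) u v =
  E (b2Z u * b2Z (xorb c false) - b2Z v * b2Z false) * Sm j (t' + Nat.b2n (c && false)) (xorb c false) false +
  E (b2Z u * b2Z (xorb c true) - b2Z v * b2Z true) * Sm j (t' + Nat.b2n (c && true)) (xorb c true) true.
Proof.
  unfold Sm. rewrite Nat.pow_succ_r', sumC_double, <- !sumC_scal, <- sumC_plus.
  apply sumC_ext. intros n _.
  replace (2 * n)%nat with (2 * n + Nat.b2n false)%nat by (simpl; lia).
  replace (2 * n + Nat.b2n false + 1)%nat with (2 * n + Nat.b2n true)%nat by (simpl; lia).
  rewrite !expo_split.
  replace (expo (t' + Nat.b2n (c && false)) n (xorb c false) false + b2Z u * b2Z (xorb c false) - b2Z v * b2Z false)%Z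
    with (expo (t' + Nat.b2n (c && false)) n (xorb c false) false + (b2Z u * b2Z (xorb c false) - b2Z v * b2Z false))%Z by ring.
  replace (expo (t' + Nat.b2n (c && true)) n (xorb c true) true + b2Z u * b2Z (xorb c true) - b2Z v * b2Z true)%Z
    with (expo (t' + Nat.b2n (c && true)) n (xorb c true) true + (b2Z u * b2Z (xorb c true) - b2Z v * b2Z true))%Z by ring.
  rewrite !E_add. ring.
Qed.

Definition idx : Type := (bool * bool * bool)%type.

Definition comp (j m : nat) (i : idx) : C :=
  let '(s, u, v) := i in Sm j (m + Nat.b2n s) u v.

Definition step (b : bool) (i : idx) : list (Z * idx) :=
  let '(s, u, v) := i in
  map (fun bn => ((b2Z u * b2Z (xorb (xorb b s) bn) - b2Z v * b2Z bn)%Z,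
                  ((b && s) || (xorb b s && bn), xorb (xorb b s) bn, bn))) [false; true].

Definition lsum (l : list (Z * idx)) (g : idx -> C) : C :=
  fold_right (fun p acc => E (fst p) * g (snd p) + acc) 0 l.

Lemma comp_step0 j m' b i : comp (S j) (2 * m' + Nat.b2n b) i = lsum (step b i) (comp j m').
Proof.
  destruct i as [[s u] v]. unfold comp, step, lsum. simpl map. simpl fold_right.
  replace (2 * m' + Nat.b2n b + Nat.b2n s)%nat with (2 * (m' + Nat.b2n (b && s)) + Nat.b2n (xorb b s))%nat
    by (destruct b, s; simpl; lia).
  rewrite S_step. rewrite Cplus_0_r.
  f_equal; f_equal; f_equal; destruct b, s; simpl; lia.
Qed.

Lemma comp_step j m i : comp (S j) m i = lsum (step (Nat.odd m) i) (comp j (m / 2)).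
Proof. rewrite (decomp m) at 1. apply comp_step0. Qed.

Fixpoint bits (m l : nat) : list bool :=
  match l with O => [] | S l' => Nat.odd m :: bits (m / 2) l' end.

Fixpoint expand (w : list bool) (i : idx) : list (Z * idx) :=
  match w with
  | [] => [(0%Z, i)]
  | b :: w' => flat_map (fun p => map (fun q => ((fst p + fst q)%Z, snd q)) (expand w' (snd p))) (step b i)
  end.

Lemma lsum_app l1 l2 g : lsum (l1 ++ l2) g = lsum l1 g + lsum l2 g.
Proof. induction l1; simpl. - ring. - rewrite IHl1. ring. Qed.

Lemma lsum_shift e l g : lsum (map (fun q => ((e + fst q)%Z, snd q)) l) g = E e * lsum l g.
Proof. induction l; simpl. - ring. - rewrite IHl, E_add. ring. Qed.

Lemma lsum_flat F L g :
  lsum (flat_map (fun p => map (fun q => ((fst p + fst q)%Z, snd q)) (F (snd p))) L) g =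
  lsum L (fun i => lsum (F i) g).
Proof. induction L; simpl; [reflexivity|]. rewrite lsum_app, lsum_shift, IHL. reflexivity. Qed.

Lemma lsum_ext l g h : (forall i, g i = h i) -> lsum l g = lsum l h.
Proof. intros H; induction l; simpl; [reflexivity|]. rewrite IHl, H. reflexivity. Qed.

Lemma soundness l : forall j m i, comp (l + j) m i = lsum (expand (bits m l) i) (comp j (m / 2 ^ l)).
Proof.
  induction l as [|l IH]; intros j m i.
  - cbn [Nat.add bits expand lsum fold_right fst snd]. rewrite Nat.pow_0_r, Nat.div_1_r, E_0. ring.
  - rewrite Nat.add_succ_l, comp_step. cbn [bits expand]. rewrite lsum_flat.
    apply lsum_ext. intro i'. rewrite IH, Nat.pow_succ_r', Nat.Div0.div_div. reflexivity.
Qed.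
End Th.

End Part2.
Import Part2.

Module Part3.
Local Open Scope C_scope.

Lemma abs_inv x y : (Rabs x <= y -> - y <= x <= y)%R.
Proof. unfold Rabs; destruct (Rcase_abs x); lra. Qed.

Section Th.
Variable th : R.
Hypothesis Hth : (Rabs th <= PI)%R.

Lemma lsum_bound l g K : (forall i, Cmod (g i) <= K)%R -> (Cmod (lsum th l g) <= INR (length l) * K)%R.
Proof.
  intros H. induction l as [|p l IH]; cbn [lsum fold_right length].
  - rewrite Cmod_0. simpl. lra.
  - fold (lsum th l g). eapply Rle_trans; [apply Cmod_triangle|].
    rewrite Cmod_mult, Cmod_E, S_INR. specialize (H (snd p)). lra.
Qed.

Lemma cos_half_bound : (0 <= cos (th / 2) <= 1 - th ^ 2 / 16)%R.
Proof.
  assert (HP := PI_4). assert (HP0 := PI_RGT_0).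
  apply abs_inv in Hth. 
  split.
  - apply cos_ge_0; lra.
  - destruct (cos_bound (th / 2) 0) as [_ H]; try lra.
    assert (E1 : (cos_approx (th / 2) (2 * (0 + 1)) = 1 - (th/2)^2/2 + (th/2)^4/24)%R)
      by (unfold cos_approx, cos_term; simpl; field).
    rewrite E1 in H.
    assert (Ht2 : (th ^ 2 <= 16)%R) by nra.
    nra.
Qed.

Lemma mu_bound a b : Z.abs (a - b) = 1%Z -> (Cmod (E th a + E th b) <= 2 - th ^ 2 / 8)%R.
Proof.
  intros Hab.
  assert (Hd : (b = a + 1 \/ b = a - 1)%Z) by lia.
  assert (Hc : forall d, (d = 1 \/ d = -1)%Z -> (Cmod (1 + E th d) <= 2 - th ^ 2 / 8)%R).
  { intros d Hd'.
    assert (Hsq : (Cmod (1 + E th d)) = sqrt (2 + 2 * cos th)%R).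
    { unfold Cmod, E, cexpi. simpl fst; simpl snd. f_equal.
      destruct Hd' as [-> | ->]; simpl IZR.
      - rewrite Rmult_1_l. pose proof (sin2_cos2 th) as H. rewrite !Rsqr_pow2 in H. nra.
      - replace (-1 * th)%R with (- th)%R by ring. rewrite cos_neg, sin_neg.
        pose proof (sin2_cos2 th) as H. rewrite !Rsqr_pow2 in H. nra. }
    rewrite Hsq. destruct cos_half_bound as [C1 C2].
    assert (Hc2 : cos th = (2 * cos (th / 2) * cos (th / 2) - 1)%R).
    { rewrite <- cos_2a_cos. f_equal. field. }
    assert (HP := PI_4). apply abs_inv in Hth.
    assert (Ht2 : (th ^ 2 <= 16)%R) by nra.
    rewrite <- (sqrt_pow2 (2 - th ^ 2 / 8)) by nra.
    apply sqrt_le_1_alt. rewrite Hc2. nra. }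
  destruct Hd as [-> | ->].
  - replace (E th (a + 1)) with (E th a * E th 1) by (rewrite E_add; reflexivity).
    replace (E th a + E th a * E th 1) with (E th a * (1 + E th 1)) by ring.
    rewrite Cmod_mult, Cmod_E, Rmult_1_l. apply Hc; auto.
  - replace (E th (a - 1)) with (E th a * E th (-1)) by (rewrite <- E_add; f_equal).
    replace (E th a + E th a * E th (-1)) with (E th a * (1 + E th (-1))) by ring.
    rewrite Cmod_mult, Cmod_E, Rmult_1_l. apply Hc; auto.
Qed.
End Th.

Definition idx_eqb (i j : idx) : bool :=
  let '(a, b, c) := i in let '(a', b', c') := j in Bool.eqb a a' && Bool.eqb b b' && Bool.eqb c c'.

Lemma idx_eqb_eq i j : idx_eqb i j = true -> i = j.
Proof.
  destruct i as [[a b] c], j as [[a' b'] c']. simpl. intros H.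
  apply andb_prop in H as [H H3]. apply andb_prop in H as [H1 H2].
  apply eqb_prop in H1, H2, H3. subst. reflexivity.
Qed.

Fixpoint has_merge (l : list (Z * idx)) : bool :=
  match l with
  | [] => false
  | p :: l' => existsb (fun q => idx_eqb (snd p) (snd q) && (Z.abs (fst p - fst q) =? 1)%Z) l' || has_merge l'
  end.

Section Th2.
Variable th : R.
Hypothesis Hth : (Rabs th <= PI)%R.

Lemma merge_bound l g K : has_merge l = true -> (forall i, Cmod (g i) <= K)%R ->
  (Cmod (lsum th l g) <= (INR (length l) - 2) * K + (2 - th ^ 2 / 8) * K)%R.
Proof.
  intros Hm Hg. assert (HK : (0 <= K)%R) by (eapply Rle_trans; [apply Cmod_ge_0|apply (Hg (false,false,false))]).
  induction l as [|p l IH]; [discriminate|].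
  simpl in Hm. apply orb_true_iff in Hm as [Hm|Hm].
  - apply existsb_exists in Hm as [q [Hq Hpq]]. apply andb_prop in Hpq as [Hi Hz].
    apply idx_eqb_eq in Hi. apply Z.eqb_eq in Hz.
    apply in_split in Hq as [l1 [l2 ->]].
    cbn [lsum fold_right]. fold (lsum th (l1 ++ q :: l2) g). rewrite lsum_app.
    cbn [lsum fold_right]. fold (lsum th l2 g). rewrite Hi.
    replace (E th (fst p) * g (snd q) + (lsum th l1 g + (E th (fst q) * g (snd q) + lsum th l2 g)))
      with ((E th (fst p) + E th (fst q)) * g (snd q) + (lsum th l1 g + lsum th l2 g)) by ring.
    eapply Rle_trans; [apply Cmod_triangle|]. rewrite Cmod_mult.
    assert (A1 := mu_bound th Hth _ _ Hz). assert (A2 := Hg (snd q)).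
    assert (A3 := Cmod_triangle (lsum th l1 g) (lsum th l2 g)).
    assert (A0 := Cmod_ge_0 (E th (fst p) + E th (fst q))).
    assert (A4 := Cmod_ge_0 (g (snd q))).
    rewrite length_cons, length_app, length_cons, !S_INR, plus_INR.
    pose proof (lsum_bound th l1 g K Hg). pose proof (lsum_bound th l2 g K Hg).
    assert (A5 : (Cmod (E th (fst p) + E th (fst q)) * Cmod (g (snd q)) <= (2 - th ^ 2 / 8) * K)%R).
    { apply Rmult_le_compat; auto. }
    rewrite ?S_INR. lra.
  - specialize (IH Hm). cbn [lsum fold_right]. fold (lsum th l g).
    eapply Rle_trans; [apply Cmod_triangle|]. rewrite Cmod_mult, Cmod_E, length_cons, S_INR.
    specialize (Hg (snd p)). lra.
Qed.
End Th2.

Definition nonconst (l : list bool) : bool :=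
  match l with
  | [a; b; c; d] => negb (Bool.eqb a b && Bool.eqb b c && Bool.eqb c d)
  | _ => false
  end.

Lemma window_ok0 b0 b1 b2 b3 i : nonconst [b0; b1; b2; b3] = true -> has_merge (expand [b0; b1; b2; b3] i) = true.
Proof.
  destruct i as [[s u] v].
  destruct b0, b1, b2, b3, s, u, v; vm_compute; intro H; first [reflexivity | discriminate H].
Qed.

Lemma length_expand w i : length (expand w i) = (2 ^ length w)%nat.
Proof.
  revert i; induction w as [|b w IH]; intros i; [reflexivity|].
  destruct i as [[s u] v]. cbn [expand step map flat_map].
  rewrite !length_app, !length_map, !IH. simpl. lia.
Qed.

End Part3.
Import Part3.

Fixpoint W (j m : nat) : nat :=
  match j with
  | S j1 => match j1 with
            | S (S (S j')) => if nonconst (bits m 4) then S (W j' (m / 16)) else W j1 (m / 2)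
            | _ => 0
            end
  | 0 => 0
  end.

Fixpoint T (j m : nat) : nat :=
  match j with
  | S j1 => match j1 with
            | S _ => ((if xorb (Nat.odd m) (Nat.odd (m / 2)) then 1 else 0) + T j1 (m / 2))%nat
            | 0 => 0
            end
  | 0 => 0
  end.

Lemma W_eq j' m : W (S (S (S (S j')))) m =
  if nonconst (bits m 4) then S (W j' (m / 16)) else W (S (S (S j'))) (m / 2).
Proof. reflexivity. Qed.

Lemma comp_trivial th j m i : Cmod (comp th j m i) <= 2 ^ j.
Proof.
  destruct i as [[s u] v]. unfold comp, Sm.
  eapply Rle_trans; [apply sumC_bound with (K := 1)|].
  - intros n _. rewrite Cmod_E. lra.
  - rewrite pow_INR. replace (INR 2) with 2 by (simpl; lra). lra.
Qed.

Lemma pow_mono_dec x a b : 0 <= x <= 1 -> (a <= b)%nat -> x ^ b <= x ^ a.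
Proof.
  intros Hx Hab. replace b with (a + (b - a))%nat by lia. rewrite pow_add.
  assert (0 <= x ^ a) by (apply pow_le; lra).
  assert (x ^ (b - a) <= 1).
  { clear Hab. induction (b - a)%nat; simpl; [lra|]. assert (0 <= x ^ n) by (apply pow_le; lra). nra. }
  nra.
Qed.

Section Th.
Variable th : R.
Hypothesis Hth : Rabs th <= PI.
Let cc := (1 - th ^ 2 / 128).

Lemma main_bound : forall j m i, Cmod (comp th j m i) <= 2 ^ j * cc ^ (W j m).
Proof.
  intro j. induction j as [j IH] using (well_founded_induction lt_wf). intros m i.
  destruct j as [|[|[|[|j']]]]; try (simpl W; rewrite pow_O, Rmult_1_r; apply comp_trivial).
  rewrite W_eq. destruct (nonconst (bits m 4)) eqn:Hn.
  - replace (S (S (S (S j')))) with (4 + j')%nat by lia. rewrite soundness.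
    change (2 ^ 4)%nat with 16%nat.
    assert (Hm : has_merge (expand (bits m 4) i) = true).
    { revert Hn. cbn [bits]. apply window_ok0. }
    eapply Rle_trans; [apply (merge_bound th Hth _ _ (2 ^ j' * cc ^ W j' (m / 16))); [exact Hm|]|].
    + intro i'. apply IH. lia.
    + rewrite length_expand. cbn [bits length]. simpl Nat.pow. simpl INR.
      replace (2 ^ (4 + j')) with (16 * 2 ^ j') by (rewrite pow_add; simpl; ring).
      simpl pow. unfold cc. lra.
  - rewrite comp_step.
    eapply Rle_trans; [apply (lsum_bound th _ _ (2 ^ S (S (S j')) * cc ^ W (S (S (S j'))) (m / 2)))|].
    + intro i'. apply IH. lia.
    + destruct i as [[s u] v]. simpl length. simpl INR.
      replace (2 ^ S (S (S (S j')))) with (2 * 2 ^ S (S (S j'))) by (simpl; ring). lra.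
Qed.
End Th.

Lemma T_S j m : (T (S j) m <= 1 + T j (m / 2))%nat.
Proof. destruct j; simpl T; [lia|]. destruct (xorb _ _); lia. Qed.

Lemma T_eq j m : T (S (S j)) m = ((if xorb (Nat.odd m) (Nat.odd (m / 2)) then 1 else 0) + T (S j) (m / 2))%nat.
Proof. reflexivity. Qed.

Lemma T_W : forall j m, (T j m <= 4 * W j m + 2)%nat.
Proof.
  intro j. induction j as [j IH] using (well_founded_induction lt_wf). intros m.
  destruct j as [|[|[|[|j']]]].
  - simpl; lia.
  - simpl; lia.
  - pose proof (T_S 1 m). simpl T in *. simpl W. lia.
  - pose proof (T_S 2 m). pose proof (T_S 1 (m/2)). change (T 1 (m/2/2)) with 0%nat in H0. simpl W. lia.
  - rewrite W_eq. destruct (nonconst (bits m 4)) eqn:Hn.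
    + assert (E1: (m/2/2 = m/4)%nat) by (rewrite Nat.Div0.div_div; reflexivity).
      assert (E2: (m/4/2 = m/8)%nat) by (rewrite Nat.Div0.div_div; reflexivity).
      assert (E3: (m/8/2 = m/16)%nat) by (rewrite Nat.Div0.div_div; reflexivity).
      pose proof (T_S (S (S (S j'))) m). pose proof (T_S (S (S j')) (m/2)). rewrite E1 in H0.
      pose proof (T_S (S j') (m/4)). rewrite E2 in H1. pose proof (T_S j' (m/8)). rewrite E3 in H2.
      pose proof (IH j' ltac:(lia) (m / 16)%nat). lia.
    + rewrite T_eq.
      cbn [bits nonconst] in Hn.
      destruct (Nat.odd m), (Nat.odd (m / 2)); simpl in Hn; try discriminate Hn; simpl xorb;
      pose proof (IH (S (S (S j'))) ltac:(lia) (m / 2)%nat); cbv beta iota; lia.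
Qed.

Lemma T_0 j : T j 0 = 0%nat.
Proof. induction j as [|[|j] IH]; try reflexivity. rewrite T_eq. simpl (0/2)%nat. rewrite IH. reflexivity. Qed.

Lemma T_blocks : forall t j, (2 * t < 2 ^ j)%nat -> (T j t + Nat.b2n (Nat.odd t) = 2 * blocks01 t)%nat.
Proof.
  intro t. induction t as [t IH] using (well_founded_induction lt_wf). intros j Hj.
  destruct (Nat.eq_dec t 0) as [->|Ht].
  - rewrite T_0. reflexivity.
  - destruct j as [|[|j]].
    + simpl in Hj. lia.
    + simpl in Hj. lia.
    + rewrite T_eq.
      set (y := (t / 2)%nat). set (b := Nat.odd t).
      assert (Ht2 : t = (2 * y + Nat.b2n b)%nat) by apply decomp.
      assert (Hy : (2 * y < 2 ^ S j)%nat).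
      { rewrite !Nat.pow_succ_r' in Hj. rewrite Nat.pow_succ_r'. lia. }
      assert (Hlt : (y < t)%nat) by lia.
      specialize (IH y Hlt (S j) Hy).
      replace (blocks01 t) with (blocks01 (2 * y + Nat.b2n b)) by (rewrite <- Ht2; reflexivity). rewrite blocks01_step.
      destruct b, (Nat.odd y); simpl xorb; simpl negb; simpl andb; simpl Nat.b2n in *; cbv beta iota; lia.
Qed.

Lemma W_blocks t j : (2 * t < 2 ^ j)%nat -> (blocks01 t / 2 <= W j t)%nat.
Proof.
  intros Hj. pose proof (T_blocks t j Hj). pose proof (T_W j t).
  assert (Nat.b2n (Nat.odd t) <= 1)%nat by (destruct (Nat.odd t); simpl; lia).
  pose proof (Nat.Div0.mul_div_le (blocks01 t) 2). lia.
Qed.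

Lemma Sm_bound th (Hth : Rabs th <= PI) t j : (2 * t < 2 ^ j)%nat ->
  Cmod (Sm th j t false false) <= 2 ^ j * (1 - th ^ 2 / 128) ^ (blocks01 t / 2).
Proof.
  intros Hj. pose proof (main_bound th Hth j t (false, false, false)) as H.
  unfold comp in H. simpl Nat.b2n in H. rewrite Nat.add_0_r in H.
  eapply Rle_trans; [exact H|]. apply Rmult_le_compat_l; [apply pow_le; lra|].
  apply pow_mono_dec; [|apply W_blocks; exact Hj].
  apply abs_inv in Hth. pose proof PI_4. pose proof PI_RGT_0. split; [nra|].
  assert (0 <= th ^ 2) by (apply pow2_ge_0). lra.
Qed.

Fixpoint cntn (p : nat -> bool) (M : nat) : nat :=
  match M with O => O | S M' => (cntn p M' + if p M' then 1 else 0)%nat end.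

Lemma filter_cntn p M : length (filter p (seq 0 M)) = cntn p M.
Proof.
  induction M as [|M IH]; [reflexivity|]. rewrite seq_S, filter_app, length_app, IH. simpl.
  destruct (p M); simpl; lia.
Qed.

Lemma count_d_cntn t k M : count_d t k M = cntn (fun n => Z.eqb (dd t n) k) M.
Proof. apply filter_cntn. Qed.

Lemma cntn_ext p q M : (forall x, (x < M)%nat -> p x = q x) -> cntn p M = cntn q M.
Proof. induction M; intros H; simpl; [reflexivity|]. rewrite IHM by (intros; apply H; lia). rewrite H by lia. reflexivity. Qed.

Lemma cntn_zero p M : (forall x, (x < M)%nat -> p x = false) -> cntn p M = 0%nat.
Proof. induction M; intros H; simpl; [reflexivity|]. rewrite IHM by (intros; apply H; lia). rewrite H by lia. reflexivity. Qed.

Lemma cntn_or p q r M : (forall x, (x < M)%nat -> p x = true -> q x || r x = true) -> (cntn p M <= cntn q M + cntn r M)%nat.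
Proof.
  induction M; intros H; simpl; [lia|]. specialize (IHM (fun x Hx => H x ltac:(lia))).
  specialize (H M ltac:(lia)). destruct (p M), (q M), (r M); simpl in H; try lia; discriminate H; reflexivity.
Qed.

Lemma cntn_imp p q M : (forall x, (x < M)%nat -> p x = true -> q x = true) -> (cntn p M <= cntn q M)%nat.
Proof.
  intros H. pose proof (cntn_or p q (fun _ => false) M) as H'.
  assert (cntn (fun _ => false) M = 0%nat) by (apply cntn_zero; reflexivity).
  rewrite H0 in H'. apply Nat.le_trans with (cntn q M + 0)%nat; [|lia]. apply H'.
  intros x Hx Hp. rewrite (H x Hx Hp). reflexivity.
Qed.

Lemma cntn_mono p M M' : (M <= M')%nat -> (cntn p M <= cntn p M')%nat.
Proof. induction 1; simpl; lia. Qed.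

Lemma cntn_le p M : (cntn p M <= M)%nat.
Proof. induction M; simpl; [lia|]. destruct (p M); lia. Qed.

Lemma cntn_compl p M : (cntn p M + cntn (fun x => negb (p x)) M = M)%nat.
Proof. induction M; simpl; [lia|]. destruct (p M); simpl; lia. Qed.

Lemma cntn_add p a b : cntn p (a + b) = (cntn p a + cntn (fun x => p (a + x)%nat) b)%nat.
Proof. induction b; simpl. - rewrite Nat.add_0_r; lia. - rewrite Nat.add_succ_r. simpl. rewrite IHb. lia. Qed.

Lemma cntn_periodic f N q : (0 < N)%nat -> cntn (fun n => f (n mod N)) (q * N) = (q * cntn f N)%nat.
Proof.
  intros HN. induction q as [|q IH]; [reflexivity|].
  replace (S q * N)%nat with (q * N + N)%nat by lia. rewrite cntn_add, IH.
  rewrite (cntn_ext (fun x => f ((q * N + x) mod N)) f N); [lia|].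
  intros x Hx. f_equal. rewrite Nat.add_comm, Nat.Div0.mod_add. apply Nat.mod_small; exact Hx.
Qed.

Definition goodb (t j x : nat) : bool :=
  ((x + t <? 2 ^ j)%nat || ((2 ^ j <=? x)%nat && (x + t <? 2 ^ S j)%nat)).

Lemma dd_good t j n : goodb t j (n mod 2 ^ S j) = true -> dd t n = dd t (n mod 2 ^ S j).
Proof.
  intros Hg. set (N := (2 ^ S j)%nat). set (x := (n mod N)%nat). set (H := (n / N)%nat).
  assert (HN : (0 < N)%nat) by (unfold N; apply Nat.neq_0_lt_0, Nat.pow_nonzero; lia).
  assert (Hn : n = (H * N + x)%nat) by (unfold H, x; rewrite Nat.mul_comm; apply Nat.div_mod; lia).
  assert (Hx : (x < N)%nat) by (unfold x; apply Nat.mod_upper_bound; lia).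
  assert (HNj : N = (2 * 2 ^ j)%nat) by (unfold N; apply Nat.pow_succ_r').
  unfold goodb in Hg. fold N x in Hg.
  unfold dd. rewrite Hn at 1 2.
  replace (H * N + x + t)%nat with (H * N + (x + t))%nat by lia.
  assert (HN' : N = (2 ^ S j)%nat) by reflexivity. unfold N.
  apply orb_true_iff in Hg as [Hg|Hg].
  - apply Nat.ltb_lt in Hg.
    rewrite !r11_split by lia.
    replace (2 ^ j <=? x + t)%nat with false by (symmetry; apply Nat.leb_gt; lia).
    replace (2 ^ j <=? x)%nat with false by (symmetry; apply Nat.leb_gt; lia).
    rewrite !andb_false_r. simpl Nat.b2n. lia.
  - apply andb_prop in Hg as [H1 H2]. apply Nat.leb_le in H1. apply Nat.ltb_lt in H2.
    rewrite !r11_split by lia.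
    replace (2 ^ j <=? x + t)%nat with true by (symmetry; apply Nat.leb_le; lia).
    replace (2 ^ j <=? x)%nat with true by (symmetry; apply Nat.leb_le; lia).
    lia.
Qed.

Lemma bad_count t j : (cntn (fun x => negb (goodb t j x)) (2 ^ S j) <= 2 * t)%nat.
Proof.
  rewrite <- filter_cntn.
  set (a := (2 ^ j - t)%nat). set (b := (2 ^ S j - t)%nat).
  eapply Nat.le_trans.
  - apply (NoDup_incl_length (l' := seq a t ++ seq b t)).
    + apply NoDup_filter, seq_NoDup.
    + intros x Hx. apply filter_In in Hx as [Hx Hb]. apply in_seq in Hx.
      apply negb_true_iff in Hb. unfold goodb in Hb.
      apply orb_false_iff in Hb as [H1 H2]. apply Nat.ltb_ge in H1.
      apply in_or_app. rewrite Nat.pow_succ_r' in *.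
      destruct (2 ^ j <=? x)%nat eqn:E.
      * simpl in H2. apply Nat.ltb_ge in H2. apply Nat.leb_le in E. right. apply in_seq. unfold b. rewrite Nat.pow_succ_r'. lia.
      * apply Nat.leb_gt in E. left. apply in_seq. unfold a. lia.
  - rewrite length_app, !length_seq. lia.
Qed.

Section Counts.
Variables (t j : nat).
Let N := (2 ^ S j)%nat.
Definition gk (k : Z) : nat := cntn (fun x => goodb t j x && Z.eqb (dd t x) k) (2 ^ S j).
Definition bd : nat := cntn (fun x => negb (goodb t j x)) (2 ^ S j).

Lemma N_pos : (0 < N)%nat.
Proof. unfold N. apply Nat.neq_0_lt_0, Nat.pow_nonzero; lia. Qed.

Lemma count_lower k M : ((M / N) * gk k <= count_d t k M)%nat.
Proof.
  pose proof N_pos as HN.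
  rewrite count_d_cntn. unfold gk. fold N.
  rewrite <- cntn_periodic by exact HN.
  apply Nat.le_trans with (cntn (fun n => Z.eqb (dd t n) k) ((M / N) * N)).
  2:{ apply cntn_mono. rewrite Nat.mul_comm. apply Nat.Div0.mul_div_le. }
  apply cntn_imp. intros x _ Hx. apply andb_prop in Hx as [Hg He].
  apply Z.eqb_eq in He. apply Z.eqb_eq. rewrite <- He. apply dd_good. exact Hg.
Qed.

Lemma count_upper k M : (count_d t k M <= (M / N + 1) * (gk k + bd))%nat.
Proof.
  pose proof N_pos as HN.
  rewrite count_d_cntn. unfold gk, bd. fold N.
  eapply Nat.le_trans; [apply (cntn_mono _ M ((M / N + 1) * N))|].
  { pose proof (Nat.div_mod M N ltac:(lia)). pose proof (Nat.mod_upper_bound M N ltac:(lia)). nia. }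
  rewrite Nat.mul_add_distr_l, <- !cntn_periodic by exact HN.
  apply cntn_or. intros x _ Hx. apply Z.eqb_eq in Hx.
  destruct (goodb t j (x mod N)) eqn:Hg; simpl; [|reflexivity].
  rewrite orb_false_r. apply Z.eqb_eq. unfold N in *. rewrite <- dd_good by exact Hg. exact Hx.
Qed.
End Counts.

Lemma lim_aux a b : is_lim_seq (fun M => a + b / INR M) a.
Proof.
  assert (H0 : is_lim_seq (fun M => / INR M) (Finite 0)).
  { replace (Finite 0) with (Rbar_inv p_infty) by reflexivity.
    apply is_lim_seq_inv. apply is_lim_seq_INR. discriminate. }
  assert (H1 := is_lim_seq_scal_l _ b _ H0). simpl Rbar_mult in H1.
  assert (H := is_lim_seq_plus' _ _ a (b * 0) (is_lim_seq_const a) H1).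
  replace (a + b * 0) with a in H by ring. exact H.
Qed.

Lemma real_between (L : Rbar) (a b : R) : Rbar_le a L -> Rbar_le L b -> a <= real L <= b.
Proof. destruct L as [r| |]; simpl; intros H1 H2; try contradiction; split; assumption. Qed.

Lemma c_bounds t j k :
  INR (gk t j k) / INR (2 ^ S j) <= c_t t k <= INR (gk t j k + bd t j) / INR (2 ^ S j).
Proof.
  set (N := (2 ^ S j)%nat). assert (HN : (0 < N)%nat) by apply N_pos.
  assert (HNr : 0 < INR N) by (apply lt_0_INR; exact HN).
  set (G := INR (gk t j k)). set (B := INR (gk t j k + bd t j)).
  assert (HG : 0 <= G) by apply pos_INR. assert (HB : 0 <= B) by apply pos_INR.
  unfold c_t. apply real_between.
  - rewrite <- (is_lim_seq_unique _ _ (lim_aux (G / INR N) (- G))).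
    apply Lim_seq_le_loc. exists 1%nat. intros M HM.
    assert (HMr : 0 < INR M) by (apply lt_0_INR; lia).
    pose proof (count_lower t j k M) as Hc. fold N in Hc. apply le_INR in Hc. rewrite mult_INR in Hc.
    set (q := (M / N)%nat) in *. set (C := INR (count_d t k M)) in *.
    assert (Hq : INR M < (INR q + 1) * INR N).
    { rewrite <- S_INR, <- mult_INR. apply lt_INR. unfold q.
      pose proof (Nat.div_mod M N ltac:(lia)). pose proof (Nat.mod_upper_bound M N ltac:(lia)). nia. }
    assert (E1 : G / INR N + - G / INR M = (G * INR M - G * INR N) / (INR N * INR M)) by (field; lra).
    assert (E2 : C / INR M = C * INR N / (INR N * INR M)) by (field; lra).
    rewrite E1, E2. apply Rmult_le_compat_r. { apply Rlt_le, Rinv_0_lt_compat. nra. }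
    fold G in Hc. nra.
  - rewrite <- (is_lim_seq_unique _ _ (lim_aux (B / INR N) B)).
    apply Lim_seq_le_loc. exists 1%nat. intros M HM.
    assert (HMr : 0 < INR M) by (apply lt_0_INR; lia).
    pose proof (count_upper t j k M) as Hc. fold N in Hc. apply le_INR in Hc. rewrite mult_INR, plus_INR in Hc.
    set (q := (M / N)%nat) in *. set (C := INR (count_d t k M)) in *.
    assert (Hq : INR q * INR N <= INR M).
    { rewrite <- mult_INR. apply le_INR. unfold q. rewrite Nat.mul_comm. apply Nat.Div0.mul_div_le. }
    assert (E1 : B / INR N + B / INR M = (B * INR M + B * INR N) / (INR N * INR M)) by (field; lra).
    assert (E2 : C / INR M = C * INR N / (INR N * INR M)) by (field; lra).
    rewrite E1, E2. apply Rmult_le_compat_r. { apply Rlt_le, Rinv_0_lt_compat. nra. }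
    simpl INR in Hc. fold B in Hc. nra.
Qed.

Definition Rsum (F : list Z) (g : Z -> R) : R := fold_right (fun k acc => g k + acc) 0 F.
Fixpoint Rsumn (f : nat -> R) (M : nat) : R := match M with O => 0 | S M' => Rsumn f M' + f M' end.
Definition inZ (z : Z) (F : list Z) : bool := existsb (Z.eqb z) F.

Lemma Rsum_ext F f g : (forall k, f k = g k) -> Rsum F f = Rsum F g.
Proof. intros H; induction F; simpl; [reflexivity|]. rewrite IHF, H. reflexivity. Qed.
Lemma Rsum_plus F f g : Rsum F (fun k => f k + g k) = Rsum F f + Rsum F g.
Proof. induction F; simpl; [ring|]. rewrite IHF. ring. Qed.
Lemma Rsum_scal F c f : Rsum F (fun k => c * f k) = c * Rsum F f.
Proof. induction F; simpl; [ring|]. rewrite IHF. ring. Qed.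
Lemma Rsum_app F1 F2 f : Rsum (F1 ++ F2) f = Rsum F1 f + Rsum F2 f.
Proof. induction F1; simpl; [ring|]. rewrite IHF1. ring. Qed.
Lemma Rsum_zero F f : (forall k, f k = 0) -> Rsum F f = 0.
Proof. intros H; induction F; simpl; [reflexivity|]. rewrite IHF, H. ring. Qed.
Lemma Rsum_le F f g : (forall k, f k <= g k) -> Rsum F f <= Rsum F g.
Proof. intros H; induction F; simpl; [lra|]. specialize (H a). lra. Qed.
Lemma Rsum_nonneg F f : (forall k, 0 <= f k) -> 0 <= Rsum F f.
Proof. intros H; induction F; simpl; [lra|]. specialize (H a). lra. Qed.
Lemma Rsum_const F c : Rsum F (fun _ => c) = INR (length F) * c.
Proof. induction F; simpl length; [simpl; ring|]. rewrite S_INR. simpl. rewrite IHF. ring. Qed.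

Lemma Rsumn_ext f g M : (forall x, (x < M)%nat -> f x = g x) -> Rsumn f M = Rsumn g M.
Proof. induction M; intros H; simpl; [reflexivity|]. rewrite IHM by (intros; apply H; lia). rewrite H by lia. reflexivity. Qed.
Lemma Rsumn_plus f g M : Rsumn (fun x => f x + g x) M = Rsumn f M + Rsumn g M.
Proof. induction M; simpl; [ring|]. rewrite IHM. ring. Qed.
Lemma Rsumn_le f g M : (forall x, (x < M)%nat -> f x <= g x) -> Rsumn f M <= Rsumn g M.
Proof. induction M; intros H; simpl; [lra|]. assert (A := IHM (fun x Hx => H x ltac:(lia))). assert (B := H M ltac:(lia)). lra. Qed.
Lemma Rsumn_abs f M : Rabs (Rsumn f M) <= Rsumn (fun x => Rabs (f x)) M.
Proof. induction M; simpl. - rewrite Rabs_R0. lra. - eapply Rle_trans; [apply Rabs_triang|]. lra. Qed.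
Lemma Rsumn_cnt (p : nat -> bool) M : Rsumn (fun x => if p x then 1 else 0) M = INR (cntn p M).
Proof. induction M; simpl Rsumn; simpl cntn; [reflexivity|]. rewrite plus_INR, IHM. destruct (p M); simpl; ring. Qed.
Lemma Rsumn_tail f M0 M : (M0 <= M)%nat -> (forall m, (M0 <= m < M)%nat -> f m = 0) -> Rsumn f M = Rsumn f M0.
Proof. induction 1 as [|M Hle IHle]; intros H; [reflexivity|]. simpl. rewrite H by lia. rewrite IHle by (intros; apply H; lia). ring. Qed.

Lemma Rsum_map_seq (e : nat -> Z) g n : Rsum (map e (seq 0 n)) g = Rsumn (fun m => g (e m)) n.
Proof. induction n; [reflexivity|]. rewrite seq_S, map_app, Rsum_app, IHn. simpl. ring. Qed.

Lemma sum_n_Rsumn (a : nat -> R) K : sum_n a K = Rsumn a (S K).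
Proof. induction K. - rewrite sum_O. simpl. ring. - rewrite sum_Sn, IHK. simpl. reflexivity. Qed.

Lemma Rsum_single F z (w : Z -> R) : NoDup F ->
  Rsum F (fun k => if Z.eqb z k then w k else 0) = if inZ z F then w z else 0.
Proof.
  induction F as [|a F IH]; intros Hnd; [reflexivity|].
  inversion Hnd as [|? ? Hna Hnd']; subst. simpl. rewrite IH by exact Hnd'.
  destruct (Z.eqb z a) eqn:E; simpl.
  - apply Z.eqb_eq in E; subst.
    destruct (inZ a F) eqn:E2; [|ring].
    exfalso. apply Hna. unfold inZ in E2. apply existsb_exists in E2 as [x [Hx Hx']].
    apply Z.eqb_eq in Hx'. subst. exact Hx.
  - ring.
Qed.

Lemma regroup F (P : nat -> bool) (d : nat -> Z) (w : Z -> R) M : NoDup F ->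
  Rsum F (fun k => INR (cntn (fun x => P x && Z.eqb (d x) k) M) * w k) =
  Rsumn (fun x => if P x && inZ (d x) F then w (d x) else 0) M.
Proof.
  intros Hnd. induction M as [|M IH].
  - simpl Rsumn. apply Rsum_zero. intro k. simpl. ring.
  - simpl Rsumn. rewrite <- IH.
    rewrite (Rsum_ext F _ (fun k => INR (cntn (fun x => P x && Z.eqb (d x) k) M) * w k +
                                    (if P M then (if Z.eqb (d M) k then w k else 0) else 0))).
    2:{ intro k. simpl cntn. rewrite plus_INR. destruct (P M), (Z.eqb (d M) k); simpl; ring. }
    rewrite Rsum_plus. f_equal. destruct (P M); simpl.
    + apply Rsum_single; exact Hnd.
    + apply Rsum_zero. reflexivity.
Qed.

Lemma lim_le x y C : 0 <= C -> (forall j, x <= y + C / INR (2 ^ S j)) -> x <= y.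
Proof.
  intros HC H. destruct (Rle_or_lt x y) as [|Hlt]; [assumption|exfalso].
  destruct (INR_unbounded (C / (x - y))) as [n Hn].
  specialize (H n).
  assert (Hp : INR n < INR (2 ^ S n)) by (apply lt_INR; pose proof (Nat.pow_gt_lin_r 2 (S n) ltac:(lia)); lia).
  assert (Hpos : 0 < INR (2 ^ S n)) by (pose proof (pos_INR n); lra).
  assert (C / INR (2 ^ S n) < x - y).
  { apply (Rmult_lt_reg_r (INR (2 ^ S n))); [exact Hpos|].
    unfold Rdiv. rewrite Rmult_assoc, Rinv_l, Rmult_1_r by lra.
    assert (C / (x - y) * (x - y) = C) by (field; lra).
    assert (C / (x - y) < INR (2 ^ S n)) by lra. nra. }
  lra.
Qed.

Lemma sum_c_le1 t F : NoDup F -> Rsum F (c_t t) <= 1.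
Proof.
  intros Hnd. apply (lim_le _ _ (INR (length F) * (2 * INR t))).
  { apply Rmult_le_pos; [apply pos_INR|]. pose proof (pos_INR t); lra. }
  intros j. set (N := (2 ^ S j)%nat).
  assert (HN : 0 < INR N) by (apply lt_0_INR, N_pos).
  eapply Rle_trans; [apply (Rsum_le F _ (fun k => INR (gk t j k + bd t j) / INR N)); intro k; apply c_bounds|].
  rewrite (Rsum_ext F _ (fun k => / INR N * (INR (gk t j k) * 1) + / INR N * INR (bd t j)))
    by (intro k; rewrite plus_INR; unfold Rdiv; ring).
  rewrite Rsum_plus, !Rsum_scal, Rsum_const. unfold gk. fold N. rewrite regroup by exact Hnd.
  assert (H1 : Rsumn (fun x => if goodb t j x && inZ (dd t x) F then 1 else 0) N <= INR N).
  { rewrite Rsumn_cnt. apply le_INR, cntn_le. }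
  assert (H2 : INR (bd t j) <= 2 * INR t).
  { replace 2 with (INR 2) by reflexivity. rewrite <- mult_INR. apply le_INR, bad_count. }
  assert (H3 : 0 <= INR (length F)) by apply pos_INR.
  apply (Rmult_le_reg_l (INR N)); [exact HN|].
  replace (INR N * (/ INR N * Rsumn (fun x => if goodb t j x && inZ (dd t x) F then 1 else 0) N +
     / INR N * (INR (length F) * INR (bd t j)))) with
    (Rsumn (fun x => if goodb t j x && inZ (dd t x) F then 1 else 0) N + INR (length F) * INR (bd t j)) by (field; lra).
  replace (INR N * (1 + INR (length F) * (2 * INR t) / INR N)) with (INR N + INR (length F) * (2 * INR t)) by (field; lra).
  nra.
Qed.

Lemma r11_le n : (r11 n <= n + 2)%nat.
Proof.
  unfold r11. eapply Nat.le_trans; [apply filter_length_le|].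
  unfold bit_range. rewrite length_seq. pose proof (Nat.log2_le_lin n ltac:(lia)). lia.
Qed.

Definition pos (m : nat) : Z := Z.of_nat m.
Definition neg (m : nat) : Z := (- Z.of_nat m - 1)%Z.
Definition FK (K : nat) : list Z := map pos (seq 0 (S K)) ++ map neg (seq 0 (S K)).

Lemma NoDup_map_inj (f : nat -> Z) l : (forall a b, f a = f b -> a = b) -> NoDup l -> NoDup (map f l).
Proof.
  intros Hf Hl. induction Hl; simpl; constructor; auto.
  intros Hin. apply in_map_iff in Hin as [y [Hy Hy']]. apply Hf in Hy. subst. contradiction.
Qed.

Lemma NoDup_FK K : NoDup (FK K).
Proof.
  unfold FK. apply NoDup_app.
  - apply NoDup_map_inj; [unfold pos; intros; lia|apply seq_NoDup].
  - apply NoDup_map_inj; [unfold neg; intros; lia|apply seq_NoDup].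
  - intros a Ha Hb. apply in_map_iff in Ha as [x [Hx _]]. apply in_map_iff in Hb as [y [Hy _]].
    unfold pos, neg in *. lia.
Qed.

Lemma in_FK K k : (- Z.of_nat K - 1 <= k <= Z.of_nat K)%Z -> inZ k (FK K) = true.
Proof.
  intros Hk. unfold inZ. apply existsb_exists. exists k. split; [|apply Z.eqb_refl].
  unfold FK. apply in_or_app. destruct (Z_le_gt_dec 0 k).
  - left. apply in_map_iff. exists (Z.to_nat k). split; [unfold pos; lia|]. apply in_seq. lia.
  - right. apply in_map_iff. exists (Z.to_nat (- k - 1)). split; [unfold neg; lia|]. apply in_seq. lia.
Qed.

Section Main.
Variables (t j : nat) (th : R).
Let N := (2 ^ S j)%nat.
Let Nr := INR N.
Let K0 := (N + t + 2)%nat.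
Definition gg (k : Z) : R := INR (gk t j k) / INR (2 ^ S j).
Definition hh (k : Z) : R := c_t t k - gg k.
Let H := INR (bd t j) / Nr.

Lemma Nr_pos : 0 < Nr.
Proof. apply lt_0_INR, N_pos. Qed.

Lemma hh_nonneg k : 0 <= hh k.
Proof. unfold hh, gg. destruct (c_bounds t j k). lra. Qed.

Lemma dd_range x : (x < N)%nat -> (- Z.of_nat K0 - 1 <= dd t x <= Z.of_nat K0)%Z.
Proof.
  intros Hx. unfold dd. pose proof (r11_le (x + t)). pose proof (r11_le x). unfold K0. lia.
Qed.

Lemma gk_zero k : (k < - Z.of_nat K0 - 1 \/ Z.of_nat K0 < k)%Z -> gk t j k = 0%nat.
Proof.
  intros Hk. unfold gk. apply cntn_zero. intros x Hx.
  pose proof (dd_range x Hx). destruct (goodb t j x); [|reflexivity]. simpl.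
  apply Z.eqb_neq. lia.
Qed.

Lemma gg_sum K : (K0 <= K)%nat -> Rsum (FK K) gg = (Nr - INR (bd t j)) / Nr.
Proof.
  intros HK. pose proof Nr_pos.
  rewrite (Rsum_ext _ _ (fun k => / Nr * (INR (gk t j k) * 1))) by (intro; unfold gg, Rdiv; fold N Nr; ring).
  rewrite Rsum_scal. unfold gk. rewrite regroup by apply NoDup_FK.
  rewrite (Rsumn_ext _ (fun x => if goodb t j x then 1 else 0)).
  2:{ intros x Hx. rewrite (in_FK K).
      - rewrite andb_true_r. reflexivity.
      - pose proof (dd_range x Hx). lia. }
  rewrite Rsumn_cnt. pose proof (cntn_compl (goodb t j) (2 ^ S j)).
  unfold bd. fold N. fold N in H1. apply (f_equal INR) in H1. rewrite plus_INR in H1. fold Nr in H1.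
  unfold Rdiv. rewrite <- H1. field. lra.
Qed.

Lemma hh_sum K : (K0 <= K)%nat -> Rsum (FK K) hh <= H.
Proof.
  intros HK. unfold hh. rewrite (Rsum_ext _ _ (fun k => c_t t k + (-1) * gg k)) by (intro; ring).
  rewrite Rsum_plus, Rsum_scal, gg_sum by exact HK.
  pose proof (sum_c_le1 t (FK K) (NoDup_FK K)). pose proof Nr_pos. unfold H.
  replace (-1 * ((Nr - INR (bd t j)) / Nr)) with (-1 + INR (bd t j) / Nr) by (field; lra). lra.
Qed.

Lemma hh_pos_sum K : (K0 <= K)%nat -> Rsumn (fun m => hh (pos m)) (S K) <= H.
Proof.
  intros HK. rewrite <- Rsum_map_seq. pose proof (hh_sum K HK). unfold FK in H0. rewrite Rsum_app in H0.
  pose proof (Rsum_nonneg (map neg (seq 0 (S K))) hh hh_nonneg). lra.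
Qed.

Lemma hh_neg_sum K : (K0 <= K)%nat -> Rsumn (fun m => hh (neg m)) (S K) <= H.
Proof.
  intros HK. rewrite <- Rsum_map_seq. pose proof (hh_sum K HK). unfold FK in H0. rewrite Rsum_app in H0.
  pose proof (Rsum_nonneg (map pos (seq 0 (S K))) hh hh_nonneg). lra.
Qed.

Lemma series_approx (e : nat -> Z) (phi : R -> R) :
  (forall y, Rabs (phi y) <= 1) ->
  (forall K, (K0 <= K)%nat -> Rsumn (fun m => hh (e m)) (S K) <= H) ->
  (forall m, (K0 < m)%nat -> gg (e m) = 0) ->
  Rabs (Series (fun m => c_t t (e m) * phi (IZR (e m) * th)) -
        Rsumn (fun m => gg (e m) * phi (IZR (e m) * th)) (S K0)) <= H.
Proof.
  intros Hphi Hh Hg.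
  set (A := Rsumn (fun m => gg (e m) * phi (IZR (e m) * th)) (S K0)).
  assert (Hpart : forall K, (K0 <= K)%nat ->
            A - H <= sum_n (fun m => c_t t (e m) * phi (IZR (e m) * th)) K <= A + H).
  { intros K HK. rewrite sum_n_Rsumn.
    rewrite (Rsumn_ext _ (fun m => gg (e m) * phi (IZR (e m) * th) + hh (e m) * phi (IZR (e m) * th)))
      by (intros; unfold hh; ring).
    rewrite Rsumn_plus.
    rewrite (Rsumn_tail _ (S K0) (S K)) by (try lia; intros m Hm; rewrite Hg by lia; ring).
    fold A.
    assert (Habs := Rsumn_abs (fun m => hh (e m) * phi (IZR (e m) * th)) (S K)).
    assert (Hle : Rsumn (fun x => Rabs (hh (e x) * phi (IZR (e x) * th))) (S K) <= Rsumn (fun m => hh (e m)) (S K)).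
    { apply Rsumn_le. intros x _. rewrite Rabs_mult, (Rabs_pos_eq (hh (e x))) by apply hh_nonneg.
      pose proof (hh_nonneg (e x)). pose proof (Hphi (IZR (e x) * th)). nra. }
    specialize (Hh K HK).
    cbv beta in Habs.
    assert (HX := abs_inv _ _ (Rle_trans _ _ _ Habs (Rle_trans _ _ _ Hle Hh))). split; lra.
    }
  assert (Hb : A - H <= Series (fun m => c_t t (e m) * phi (IZR (e m) * th)) <= A + H).
  { unfold Series. apply real_between.
    - rewrite <- (Lim_seq_const (A - H)). apply Lim_seq_le_loc. exists K0. intros K HK. apply Hpart; exact HK.
    - rewrite <- (Lim_seq_const (A + H)). apply Lim_seq_le_loc. exists K0. intros K HK. apply Hpart; exact HK. }
  unfold Rabs. destruct (Rcase_abs _); lra.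
Qed.

End Main.

Lemma fst_sumC f M : fst (sumC f M) = Rsumn (fun n => fst (f n)) M.
Proof. induction M; simpl; [reflexivity|]. rewrite IHM. reflexivity. Qed.
Lemma snd_sumC f M : snd (sumC f M) = Rsumn (fun n => snd (f n)) M.
Proof. induction M; simpl; [reflexivity|]. rewrite IHM. reflexivity. Qed.

Lemma expo_00 t n : expo t n false false = dd t n.
Proof. unfold expo, b2Z. simpl. ring. Qed.

Lemma Cmod_pair_le a b : Cmod (a, b) <= Rabs a + Rabs b.
Proof.
  unfold Cmod. simpl fst; simpl snd.
  rewrite <- (sqrt_pow2 (Rabs a + Rabs b)) by (pose proof (Rabs_pos a); pose proof (Rabs_pos b); lra).
  apply sqrt_le_1_alt. rewrite <- (pow2_abs a), <- (pow2_abs b).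
  pose proof (Rabs_pos a); pose proof (Rabs_pos b). nra.
Qed.

Lemma Cmod_scal r a b : Cmod (r * a, r * b) = Rabs r * Cmod (a, b).
Proof.
  rewrite <- Cmod_R, <- Cmod_mult. f_equal. unfold Cmult, RtoC. simpl. f_equal; ring.
Qed.

Lemma Cmod_close p1 p2 q1 q2 : Cmod (p1, p2) <= Cmod (q1, q2) + Rabs (p1 - q1) + Rabs (p2 - q2).
Proof.
  replace (p1, p2) with (Cplus (q1, q2) (p1 - q1, p2 - q2)) by (unfold Cplus; simpl; f_equal; ring).
  eapply Rle_trans; [apply Cmod_triangle|]. pose proof (Cmod_pair_le (p1 - q1) (p2 - q2)). lra.
Qed.

Lemma abs_cos x : Rabs (cos x) <= 1.
Proof. pose proof (COS_bound x). unfold Rabs; destruct (Rcase_abs _); lra. Qed.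
Lemma abs_sin x : Rabs (sin x) <= 1.
Proof. pose proof (SIN_bound x). unfold Rabs; destruct (Rcase_abs _); lra. Qed.

Section Final.
Variables (t j : nat) (th : R).
Let N := (2 ^ S j)%nat.
Let Nr := INR N.
Let K0 := (N + t + 2)%nat.
Let H := INR (bd t j) / Nr.

Let S1 (e : nat -> Z) (phi : R -> R) := Series (fun m => c_t t (e m) * phi (IZR (e m) * th)).
Let A1 (e : nat -> Z) (phi : R -> R) := Rsumn (fun m => gg t j (e m) * phi (IZR (e m) * th)) (S K0).

Lemma gamma_eq : gamma_t t th = (S1 pos cos + S1 neg cos, S1 pos sin + S1 neg sin).
Proof.
  unfold gamma_t, sumZ, CSeries, S1. unfold Cplus. simpl fst; simpl snd.
  f_equal; f_equal; apply Series_ext; intro m; unfold Cmult, RtoC, cexpi, pos, neg; simpl; ring.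
Qed.

Lemma gg_pos_zero m : (K0 < m)%nat -> gg t j (pos m) = 0.
Proof. intros Hm. unfold gg. rewrite gk_zero by (unfold pos; fold N; fold K0; lia). simpl. unfold Rdiv. ring. Qed.
Lemma gg_neg_zero m : (K0 < m)%nat -> gg t j (neg m) = 0.
Proof. intros Hm. unfold gg. rewrite gk_zero by (unfold neg; fold N; fold K0; lia). simpl. unfold Rdiv. ring. Qed.

Lemma approx (e : nat -> Z) phi : (e = pos \/ e = neg) -> (phi = cos \/ phi = sin) ->
  Rabs (S1 e phi - A1 e phi) <= H.
Proof.
  intros He Hphi. apply series_approx.
  - destruct Hphi; subst; [apply abs_cos|apply abs_sin].
  - destruct He; subst; [apply hh_pos_sum|apply hh_neg_sum].
  - destruct He; subst; [apply gg_pos_zero|apply gg_neg_zero].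
Qed.

Lemma A_combine (phi : R -> R) :
  A1 pos phi + A1 neg phi = / Nr * Rsumn (fun x => if goodb t j x then phi (IZR (dd t x) * th) else 0) N.
Proof.
  unfold A1. rewrite <- !(Rsum_map_seq _ (fun k => gg t j k * phi (IZR k * th))), <- Rsum_app.
  fold (FK K0).
  rewrite (Rsum_ext _ _ (fun k => / Nr * (INR (gk t j k) * phi (IZR k * th)))) by (intro; unfold gg, Rdiv; fold N Nr; ring).
  rewrite Rsum_scal. unfold gk. rewrite regroup by apply NoDup_FK. f_equal.
  apply Rsumn_ext. intros x Hx. rewrite (in_FK K0).
  - rewrite andb_true_r. reflexivity.
  - pose proof (dd_range t j x Hx). lia.
Qed.

Lemma split_good (phi : R -> R) :
  Rsumn (fun x => phi (IZR (dd t x) * th)) N =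
  Rsumn (fun x => if goodb t j x then phi (IZR (dd t x) * th) else 0) N +
  Rsumn (fun x => if goodb t j x then 0 else phi (IZR (dd t x) * th)) N.
Proof. rewrite <- Rsumn_plus. apply Rsumn_ext. intros. destruct (goodb t j x); ring. Qed.

Lemma bad_part (phi : R -> R) : (forall y, Rabs (phi y) <= 1) ->
  Rabs (Rsumn (fun x => if goodb t j x then 0 else phi (IZR (dd t x) * th)) N) <= INR (bd t j).
Proof.
  intros Hp. eapply Rle_trans; [apply Rsumn_abs|].
  unfold bd. rewrite <- Rsumn_cnt. apply Rsumn_le. intros x _.
  destruct (goodb t j x); simpl; [rewrite Rabs_R0; lra|apply Hp].
Qed.

Lemma gamma_close : Cmod (gamma_t t th) <= Cmod (Sm th (S j) t false false) / Nr + 6 * H.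
Proof.
  pose proof (Nr_pos j) as HN. fold N Nr in HN.
  rewrite gamma_eq.
  set (X := fst (Sm th (S j) t false false)). set (Y := snd (Sm th (S j) t false false)).
  assert (HX : X = Rsumn (fun x => cos (IZR (dd t x) * th)) N).
  { unfold X, Sm. rewrite fst_sumC. apply Rsumn_ext. intros. rewrite expo_00. reflexivity. }
  assert (HY : Y = Rsumn (fun x => sin (IZR (dd t x) * th)) N).
  { unfold Y, Sm. rewrite snd_sumC. apply Rsumn_ext. intros. rewrite expo_00. reflexivity. }
  set (Rc := Rsumn (fun x => if goodb t j x then 0 else cos (IZR (dd t x) * th)) N).
  set (Rs := Rsumn (fun x => if goodb t j x then 0 else sin (IZR (dd t x) * th)) N).
  assert (Hc := A_combine cos). assert (Hs := A_combine sin).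
  rewrite split_good in HX, HY. fold Rc in HX. fold Rs in HY.
  assert (G1 : A1 pos cos + A1 neg cos = / Nr * (X - Rc)) by (rewrite Hc, HX; ring).
  assert (G2 : A1 pos sin + A1 neg sin = / Nr * (Y - Rs)) by (rewrite Hs, HY; ring).
  eapply Rle_trans; [apply (Cmod_close _ _ (A1 pos cos + A1 neg cos) (A1 pos sin + A1 neg sin))|].
  rewrite G1, G2, Cmod_scal.
  assert (E1 := approx pos cos (or_introl eq_refl) (or_introl eq_refl)).
  assert (E2 := approx neg cos (or_intror eq_refl) (or_introl eq_refl)).
  assert (E3 := approx pos sin (or_introl eq_refl) (or_intror eq_refl)).
  assert (E4 := approx neg sin (or_intror eq_refl) (or_intror eq_refl)).
  fold H in E1, E2, E3, E4.
  assert (B1 := bad_part cos abs_cos). assert (B2 := bad_part sin abs_sin). fold Rc in B1. fold Rs in B2.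
  assert (Hsm : Cmod (X - Rc, Y - Rs) <= Cmod (Sm th (S j) t false false) + Rabs Rc + Rabs Rs).
  { pose proof (Cmod_close (X - Rc) (Y - Rs) X Y).
    replace (X - Rc - X) with (- Rc) in H0 by ring. replace (Y - Rs - Y) with (- Rs) in H0 by ring.
    rewrite !Rabs_Ropp in H0. unfold X, Y in H0. rewrite <- surjective_pairing in H0. exact H0. }
  rewrite Rabs_pos_eq by (apply Rlt_le, Rinv_0_lt_compat; exact HN).
  assert (T1 : Rabs (S1 pos cos + S1 neg cos - (A1 pos cos + A1 neg cos)) <= 2 * H).
  { replace (S1 pos cos + S1 neg cos - (A1 pos cos + A1 neg cos)) with
      ((S1 pos cos - A1 pos cos) + (S1 neg cos - A1 neg cos)) by ring.
    pose proof (Rabs_triang (S1 pos cos - A1 pos cos) (S1 neg cos - A1 neg cos)). lra. }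
  assert (T2 : Rabs (S1 pos sin + S1 neg sin - (A1 pos sin + A1 neg sin)) <= 2 * H).
  { replace (S1 pos sin + S1 neg sin - (A1 pos sin + A1 neg sin)) with
      ((S1 pos sin - A1 pos sin) + (S1 neg sin - A1 neg sin)) by ring.
    pose proof (Rabs_triang (S1 pos sin - A1 pos sin) (S1 neg sin - A1 neg sin)). lra. }
  rewrite <- G1, <- G2 in *.
  assert (Hinv : 0 < / Nr) by (apply Rinv_0_lt_compat; exact HN).
  assert (/ Nr * Cmod (X - Rc, Y - Rs) <= Cmod (Sm th (S j) t false false) / Nr + 2 * H).
  { unfold H, Rdiv. 
    apply Rle_trans with (/ Nr * (Cmod (Sm th (S j) t false false) + Rabs Rc + Rabs Rs)).
    - apply Rmult_le_compat_l; lra.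
    - nra. }
  lra.
Qed.
End Final.

Theorem proposition3p10 (t : nat) (theta : R) :
  Rabs theta <= PI ->
  Cmod (gamma_t t theta) <= (1 - theta ^ 2 / 128) ^ (blocks01 t / 2).
Proof.
  intros Hth.
  set (B := (1 - theta ^ 2 / 128) ^ (blocks01 t / 2)).
  assert (HB : 0 <= B).
  { unfold B. apply pow_le. apply abs_inv in Hth. pose proof PI_4. pose proof PI_RGT_0. nra. }
  apply (lim_le _ _ (24 * INR t)). { pose proof (pos_INR t). lra. }
  intros j.
  pose proof (gamma_close t j theta) as Hg.
  set (N := (2 ^ S j)%nat) in *.
  assert (HN : 0 < INR N) by (apply lt_0_INR, N_pos).
  assert (Hbd : INR (bd t j) <= 2 * INR t).
  { replace 2 with (INR 2) by reflexivity. rewrite <- mult_INR. apply le_INR, bad_count. }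
  assert (HNpow : INR N = 2 ^ S j) by (unfold N; rewrite pow_INR; simpl INR; f_equal; lra).
  assert (Hsplit : 6 * (INR (bd t j) / INR N) <= 12 * INR t / INR N).
  { unfold Rdiv. apply Rmult_le_reg_r with (INR N); [exact HN|].
    replace (6 * (INR (bd t j) * / INR N) * INR N) with (6 * INR (bd t j)) by (field; lra).
    replace (12 * INR t * / INR N * INR N) with (12 * INR t) by (field; lra). lra. }
  destruct (Nat.lt_ge_cases (2 * t) N) as [Hlt|Hge].
  - pose proof (Sm_bound theta Hth t (S j) Hlt) as Hs. fold B in Hs. rewrite <- HNpow in Hs.
    assert (Cmod (Sm theta (S j) t false false) / INR N <= B).
    { unfold Rdiv. apply Rmult_le_reg_r with (INR N); [exact HN|].
      rewrite Rmult_assoc, Rinv_l, Rmult_1_r by lra. lra. }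
    assert (0 <= 12 * INR t / INR N) by (apply Rdiv_le_0_compat; [pose proof (pos_INR t); lra|exact HN]).
    assert (24 * INR t / INR N = 2 * (12 * INR t / INR N)) by (field; lra).
    lra.
  - pose proof (comp_trivial theta (S j) t (false, false, false)) as Hs.
    unfold comp in Hs. simpl Nat.b2n in Hs. rewrite Nat.add_0_r in Hs. rewrite <- HNpow in Hs.
    assert (Cmod (Sm theta (S j) t false false) / INR N <= 1).
    { unfold Rdiv. apply Rmult_le_reg_r with (INR N); [exact HN|].
      rewrite Rmult_assoc, Rinv_l, Rmult_1_r by lra. lra. }
    assert (Ht : INR N <= 2 * INR t) by (replace 2 with (INR 2) by reflexivity; rewrite <- mult_INR; apply le_INR; lia).
    assert (12 * INR t / INR N >= 6).
    { unfold Rdiv. apply Rle_ge. apply Rmult_le_reg_r with (INR N); [exact HN|].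
      rewrite Rmult_assoc, Rinv_l, Rmult_1_r by lra. lra. }
    assert (24 * INR t / INR N = 2 * (12 * INR t / INR N)) by (field; lra).
    lra.
Qed.
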